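(* Let $M$ be a model. (1) For every history formula $\varphi$ of CTL*KΔ, every history $h$ and every observation record $r$ that stops at $h$: $h,r\models\varphi$ iff $\mathit{last}(h),\mathit{IS}(h,r),o(h,r)\models_I\varphi$. (2) For every path formula $\psi$, every path $\pi$, every $n\in\mathbb N$ and every observation record $r$ that stops at $n$: $\pi,n,r\models\psi$ iff $\pi_{\ge n},\ \mathit{IS}(\pi_{\le n},r),\ o(\pi_{\le n},r)\models_I\psi$.
   Context: Fix a countably infinite set $\mathit{AP}$ of atomic propositions and a finite nonempty set $\mathit{Obs}$ of observations. For a word $w$ we write $w_i$ for its letter at position $i$ (positions start at $0$), $w_{\le i}$ for its prefix ending at position $i$, $w_{\ge i}$ for its suffix starting at position $i$, $|w|$ for the length of a finite word, and $\mathit{last}(w)$ for the last letter of a finite word; $w\preceq w'$ means $w$ is a prefix of $w'$. Syntax of CTL*KΔ (single agent): history formulas $\varphi::=p\mid\neg\varphi\mid\varphi\wedge\varphi\mid\mathbf A\psi\mid\mathbf K\varphi\mid\Delta^{o}\varphi$ and path formulas $\psi::=\varphi\mid\neg\psi\mid\psi\wedge\psi\mid\mathbf X\psi\mid\psi\,\mathbf U\,\psi$, with $p\in\mathit{AP}$ and $o\in\mathit{Obs}$; the formulas of the logic are the history formulas. A model is $M=(\mathit{AP}_f,S,T,V,\{\sim_o\}_{o\in\mathit{Obs}},s_\iota,o_\iota)$ where $\mathit{AP}_f\subseteq\mathit{AP}$ is finite, $S$ is a finite set of states, $T\subseteq S\times S$ is left-total, $V:S\to 2^{\mathit{AP}_f}$,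 each $\sim_o$ is an equivalence relation on $S$, $s_\iota\in S$ and $o_\iota\in\mathit{Obs}$. A path is an infinite sequence $\pi=s_0s_1\dots$ of states with $s_i\,T\,s_{i+1}$ for all $i$ (starting at any state); a history is a finite nonempty prefix of a path. An observation record is a finite word over $\mathit{Obs}\times\mathbb N$; $\epsilon$ is the empty record, $r\cdot(o,n)$ is $r$ with $(o,n)$ appended, and $r_{=n}$ is the subword of $r$ consisting of the pairs whose second component is $n$. The record $r$ stops at $n$ if $r_{=m}$ is empty for all $m>n$, and stops at a history $h$ if it stops at $|h|-1$. The list $\mathit{ol}(r,n)$ is defined by $\mathit{ol}(r,0)=o_\iota\cdot o_1\cdots o_k$ if $r_{=0}=(o_1,0)\cdots(o_k,0)$, and $\mathit{ol}(r,n+1)=\mathit{last}(\mathit{ol}(r,n))\cdot o_1\cdots o_k$ if $r_{=n+1}=(o_1,n+1)\cdots(o_k,n+1)$. Two histories are equivalent, $h\approx_r h'$, if $|h|=|h'|$ and for every $i<|h|$ and every $o$ occurring in $\mathit{ol}(r,i)$, $h_i\sim_o h'_i$. Natural semantics: for a history $h$ and record $r$: $h,r\models p$ iff $p\in V(\mathit{last}(h))$; $h,r\models\neg\varphi$ iff not $h,r\models\varphi$; $h,r\models\varphi_1\wedge\varphi_2$ iff both hold; $h,r\models\mathbf A\psi$ iff for all paths $\pi$ with $h\preceq\pi$, $\pi,|h|-1,r\models\psi$; $h,r\models\mathbf K\varphi$ iff $h',r\models\varphi$ for all histories $h'$ with $h'\approx_r h$; $h,r\models\Delta^o\varphi$ iff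 $h,r\cdot(o,|h|-1)\models\varphi$. For a path $\pi$, $n\in\mathbb N$ and record $r$: $\pi,n,r\models\varphi$ iff $\pi_{\le n},r\models\varphi$; negation and conjunction as usual; $\pi,n,r\models\mathbf X\psi$ iff $\pi,n+1,r\models\psi$; $\pi,n,r\models\psi_1\mathbf U\psi_2$ iff there is $m\ge n$ with $\pi,m,r\models\psi_2$ and $\pi,k,r\models\psi_1$ for all $n\le k<m$. For $I\subseteq S$, $T(I)=\{s'\mid\exists s\in I,\ s\,T\,s'\}$; $[s]_o=\{s'\mid s\sim_o s'\}$. The information set is $\mathit{IS}(h,r)=\{\mathit{last}(h')\mid h'\text{ a history with }h'\approx_r h\}$. Updates: $U_T(I,s',o)=T(I)\cap[s']_o$ and $U_\Delta(I,s,o')=I\cap[s]_{o'}$. $o(h,r)$ denotes the last element of $\mathit{ol}(r,|h|-1)$. Alternative semantics, for $s\in S$, $I\subseteq S$, $o\in\mathit{Obs}$: $s,I,o\models_I p$ iff $p\in V(s)$; negation and conjunction as usual; $s,I,o\models_I\mathbf A\psi$ iff for every path $\pi$ with $\pi_0=s$, $\pi,I,o\models_I\psi$; $s,I,o\models_I\mathbf K\varphi$ iff $s',I,o\models_I\varphi$ for all $s'\in I$; $s,I,o\models_I\Delta^{o'}\varphi$ iff $s,U_\Delta(I,s,o'),o'\models_I\varphi$. For a path $\pi$: $\pi,I,o\models_I\varphi$ iff $\pi_0,I,o\models_I\varphi$; negation and conjunction as usual; $\pi,I,o\models_I\mathbf X\psi$ iff $\pi_{\ge1},U_T(I,\pi_1,o),o\models_I\psi$;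 $\pi,I,o\models_I\psi_1\mathbf U\psi_2$ iff there is $n\ge0$ with $\pi_{\ge n},U_T^n(I,\pi,o),o\models_I\psi_2$ and $\pi_{\ge m},U_T^m(I,\pi,o),o\models_I\psi_1$ for all $0\le m<n$, where $U_T^0(I,\pi,o)=I$ and $U_T^{n+1}(I,\pi,o)=U_T(U_T^n(I,\pi,o),\pi_{n+1},o)$. *)

(* Defs.v *)
From mathcomp Require Import all_boot.

Set Implicit Arguments.
Unset Strict Implicit.
Unset Printing Implicit Defensive.

(* Atomic propositions AP = nat (countably infinite).
   Observations: a finite type Obs (nonempty since every model has o_iota). *)

Record model (Obs : finType) := Model {
  APf : seq nat;
  st : finType;
  trans : rel st;
  trans_total : forall s, exists s', trans s s';
  val : st -> pred nat;
  val_APf : forall s p, val s p -> p \in APf;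
  sim : Obs -> rel st;
  sim_refl : forall o, reflexive (sim o);
  sim_sym : forall o, symmetric (sim o);
  sim_trans : forall o, transitive (sim o);
  s_init : st;
  o_init : Obs
}.

Inductive hform (Obs : Type) : Type :=
| HAtom : nat -> hform Obs
| HNot : hform Obs -> hform Obs
| HAnd : hform Obs -> hform Obs -> hform Obs
| HA : pform Obs -> hform Obs
| HK : hform Obs -> hform Obs
| HDelta : Obs -> hform Obs -> hform Obs
with pform (Obs : Type) : Type :=
| PH : hform Obs -> pform Obs
| PNot : pform Obs -> pform Obs
| PAnd : pform Obs -> pform Obs -> pform Obs
| PX : pform Obs -> pform Obs
| PU : pform Obs -> pform Obs -> pform Obs.

Section Semantics.
Variable Obs : finType.
Variable M : model Obs.
Notation S := (st M).

Definition record := seq (Obs * nat).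

Definition rec_at (r : record) (n : nat) : record := [seq p <- r | p.2 == n].

Definition stops_at (r : record) (n : nat) : Prop :=
  forall m, n < m -> rec_at r m = [::].

Definition stops_at_hist (r : record) (h : seq S) : Prop := stops_at r (size h).-1.

Fixpoint ol (r : record) (n : nat) : seq Obs :=
  match n with
  | 0 => @o_init _ M :: map fst (rec_at r 0)
  | m.+1 => last (@o_init _ M) (ol r m) :: map fst (rec_at r m.+1)
  end.

Definition is_path (pi : nat -> S) : Prop := forall i, trans (pi i) (pi i.+1).

Definition prefix_of (h : seq S) (pi : nat -> S) : Prop := h = mkseq pi (size h).

Definition is_history (h : seq S) : Prop :=
  0 < size h /\ exists pi, is_path pi /\ prefix_of h pi.

Definition hlast (h : seq S) : S := last (@s_init _ M) h.

Definition upto (pi : nat -> S) (n : nat) : seq S := mkseq pi n.+1.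
Definition from (pi : nat -> S) (n : nat) : nat -> S := fun i => pi (n + i).

Definition hequiv (r : record) (h h' : seq S) : Prop :=
  size h = size h' /\
  forall i, i < size h -> forall o, o \in ol r i ->
    @sim _ M o (nth (@s_init _ M) h i) (nth (@s_init _ M) h' i).

Definition IS (h : seq S) (r : record) : S -> Prop :=
  fun s => exists h', is_history h' /\ hequiv r h' h /\ hlast h' = s.

Definition ocur (h : seq S) (r : record) : Obs := last (@o_init _ M) (ol r (size h).-1).

Fixpoint hsat (f : hform Obs) (h : seq S) (r : record) {struct f} : Prop :=
  match f with
  | HAtom p => val (hlast h) p
  | HNot f1 => ~ hsat f1 h r
  | HAnd f1 f2 => hsat f1 h r /\ hsat f2 h r
  | HA g => forall pi, is_path pi -> prefix_of h pi -> psat g pi (size h).-1 r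
  | HK f1 => forall h', is_history h' -> hequiv r h' h -> hsat f1 h' r
  | HDelta o f1 => hsat f1 h (rcons r (o, (size h).-1))
  end
with psat (g : pform Obs) (pi : nat -> S) (n : nat) (r : record) {struct g} : Prop :=
  match g with
  | PH f => hsat f (upto pi n) r
  | PNot g1 => ~ psat g1 pi n r
  | PAnd g1 g2 => psat g1 pi n r /\ psat g2 pi n r
  | PX g1 => psat g1 pi n.+1 r
  | PU g1 g2 => exists m, n <= m /\ psat g2 pi m r /\
                  forall k, n <= k -> k < m -> psat g1 pi k r
  end.

Definition Tset (I : S -> Prop) : S -> Prop := fun s' => exists s, I s /\ trans s s'.
Definition UT (I : S -> Prop) (s' : S) (o : Obs) : S -> Prop :=
  fun x => Tset I x /\ @sim _ M o s' x.
Definition UD (I : S -> Prop) (s : S) (o' : Obs) : S -> Prop :=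
  fun x => I x /\ @sim _ M o' s x.

Fixpoint UTn (n : nat) (I : S -> Prop) (pi : nat -> S) (o : Obs) : S -> Prop :=
  match n with
  | 0 => I
  | m.+1 => UT (UTn m I pi o) (pi m.+1) o
  end.

Fixpoint isat (f : hform Obs) (s : S) (I : S -> Prop) (o : Obs) {struct f} : Prop :=
  match f with
  | HAtom p => val s p
  | HNot f1 => ~ isat f1 s I o
  | HAnd f1 f2 => isat f1 s I o /\ isat f2 s I o
  | HA g => forall pi, is_path pi -> pi 0 = s -> ipsat g pi I o
  | HK f1 => forall s', I s' -> isat f1 s' I o
  | HDelta o' f1 => isat f1 s (UD I s o') o'
  end
with ipsat (g : pform Obs) (pi : nat -> S) (I : S -> Prop) (o : Obs) {struct g} : Prop :=
  match g with
  | PH f => isat f (pi 0) I o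
  | PNot g1 => ~ ipsat g1 pi I o
  | PAnd g1 g2 => ipsat g1 pi I o /\ ipsat g2 pi I o
  | PX g1 => ipsat g1 (from pi 1) (UT I (pi 1) o) o
  | PU g1 g2 => exists n, ipsat g2 (from pi n) (UTn n I pi o) o /\
                  forall m, m < n -> ipsat g1 (from pi m) (UTn m I pi o) o
  end.

End Semantics.

(* Main.v *)
Require Import Defs.
From mathcomp Require Import all_boot.
From Stdlib Require Import FunctionalExtensionality PropExtensionality.
Set Implicit Arguments. Unset Strict Implicit. Unset Printing Implicit Defensive.

Lemma predext (T : Type) (P Q : T -> Prop) : (forall x, P x <-> Q x) -> P = Q.
Proof. move=> H; apply: functional_extensionality => x; apply: propositional_extensionality; exact: H. Qed.

Lemma ol_rcons_lt (Obs : finType) (M : model Obs) r o n i :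
  i < n -> ol M (rcons r (o, n)) i = ol M r i.
Proof.
have Hra : forall j, j != n -> rec_at (rcons r (o, n)) j = rec_at r j.
  by move=> j Hj; rewrite /rec_at filter_rcons /= eq_sym (negbTE Hj).
elim: i => [|i IH] Hi /=.
  by rewrite Hra // neq_ltn Hi.
by rewrite IH ?(ltnW Hi) // Hra // neq_ltn Hi.
Qed.

Lemma ol_rcons_eq (Obs : finType) (M : model Obs) r o n :
  ol M (rcons r (o, n)) n = rcons (ol M r n) o.
Proof.
have Hra : rec_at (rcons r (o, n)) n = rcons (rec_at r n) (o, n).
  by rewrite /rec_at filter_rcons /= eqxx.
case: n Hra => [|n] Hra /=; rewrite Hra map_rcons //.
by rewrite ol_rcons_lt.
Qed.

Lemma last_mkseq (T : Type) (x0 : T) (p : nat -> T) k : last x0 (mkseq p k.+1) = p k.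
Proof. by rewrite -nth_last size_mkseq nth_mkseq. Qed.

Definition next (Obs : finType) (M : model Obs) (s : st M) : st M := xchoose (trans_total s).
Definition spath (Obs : finType) (M : model Obs) (s : st M) : nat -> st M :=
  fun i => iter i (@next _ M) s.
Lemma spath_path (Obs : finType) (M : model Obs) (s : st M) : is_path (spath s).
Proof. move=> i; rewrite /spath iterS; exact: xchooseP. Qed.

Definition glue (T : Type) (p : nat -> T) n (q : nat -> T) : nat -> T :=
  fun i => if i <= n then p i else q (i - n.+1).

Lemma glue_path (Obs : finType) (M : model Obs) (p q : nat -> st M) n :
  is_path p -> is_path q -> trans (p n) (q 0) -> is_path (glue p n q).
Proof.
move=> Hp Hq Hn i; rewrite /glue.
case: (ltngtP i n) => Hi.
- exact: Hp.
- rewrite subSn //; exact: Hq.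
- by rewrite Hi subnn.
Qed.
Lemma IS_path (Obs : finType) (M : model Obs) (h : seq (st M)) r x :
  0 < size h ->
  (IS h r x <-> exists p, is_path p /\
     (forall i, i < size h -> forall o, o \in ol M r i ->
        sim o (p i) (nth (s_init M) h i)) /\ p (size h).-1 = x).
Proof.
move=> Hh; split.
- case=> h' [[Hs [p [Hp Hpre]]] [[Hsz Hsim] Hl]].
  exists p; split=> //; split.
  + move=> i Hi o Ho; have Hi' : i < size h' by rewrite Hsz.
    have := Hsim i Hi' o Ho.
    by rewrite Hpre nth_mkseq // -Hpre Hsz.
  + rewrite -Hl /hlast Hpre -Hsz; case: (size h') Hs => // k _.
    by rewrite last_mkseq.
- case=> p [Hp [Hsim Hx]]; exists (mkseq p (size h)); split; last split.
  + split; first by rewrite size_mkseq.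
    by exists p; split=> //; rewrite /prefix_of size_mkseq.
  + split; first by rewrite size_mkseq.
    move=> i; rewrite size_mkseq => Hi o Ho; rewrite nth_mkseq //; exact: Hsim.
  + by rewrite /hlast -Hx; case: (size h) Hh => // k _; rewrite last_mkseq.
Qed.

Lemma hequiv_sym (Obs : finType) (M : model Obs) r (h h' : seq (st M)) :
  hequiv r h h' -> hequiv r h' h.
Proof.
case=> Hs H; split=> // i Hi o Ho; rewrite sim_sym; apply: H => //; by rewrite Hs.
Qed.

Lemma hequiv_trans (Obs : finType) (M : model Obs) r (h1 h2 h3 : seq (st M)) :
  hequiv r h1 h2 -> hequiv r h2 h3 -> hequiv r h1 h3.
Proof.
case=> Hs H; case=> Hs' H'; split; first by rewrite Hs.
move=> i Hi o Ho; apply: (sim_trans (H i Hi o Ho)); apply: H' => //; by rewrite -Hs.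
Qed.

Lemma IS_hequiv (Obs : finType) (M : model Obs) r (h h' : seq (st M)) :
  hequiv r h' h -> IS h' r = IS h r.
Proof.
move=> He; apply: predext => x; split; case=> h'' [Hh [He' Hl]]; exists h''; split=> //; split=> //.
- exact: hequiv_trans He' He.
- exact: hequiv_trans He' (hequiv_sym He).
Qed.

Lemma IS_delta (Obs : finType) (M : model Obs) (h : seq (st M)) r o :
  0 < size h ->
  IS h (rcons r (o, (size h).-1)) = UD (IS h r) (hlast h) o.
Proof.
move=> Hh; apply: predext => x; rewrite /UD !IS_path //.
have Hl : hlast h = nth (s_init M) h (size h).-1 by rewrite /hlast nth_last.
split.
- case=> p [Hp [Hsim Hx]]; split.
  + exists p; split=> //; split=> // i Hi o' Ho'.
    case: (ltngtP i (size h).-1) => Hi'.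
    * by apply: Hsim => //; rewrite ol_rcons_lt.
    * by move: Hi; rewrite -(prednK Hh) ltnS leqNgt Hi'.
    * by apply: Hsim => //; rewrite Hi' ol_rcons_eq mem_rcons inE -Hi' Ho' orbT.
  + rewrite Hl -Hx sim_sym; apply: Hsim; first by rewrite prednK.
    by rewrite ol_rcons_eq mem_rcons inE eqxx.
- case=> [[p [Hp [Hsim Hx]]] Ho]; exists p; split=> //; split=> // i Hi o' Ho'.
  case: (ltngtP i (size h).-1) => Hi'.
  * by apply: Hsim => //; move: Ho'; rewrite ol_rcons_lt.
  * by move: Hi; rewrite -(prednK Hh) ltnS leqNgt Hi'.
  * move: Ho'; rewrite Hi' ol_rcons_eq mem_rcons inE => /orP [/eqP ->|Ho'].
    - by rewrite Hx -Hl sim_sym.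
    - by apply: Hsim => //; rewrite prednK.
Qed.

Lemma ocur_delta (Obs : finType) (M : model Obs) (h : seq (st M)) r o :
  ocur h (rcons r (o, (size h).-1)) = o.
Proof. by rewrite /ocur ol_rcons_eq last_rcons. Qed.

Lemma ocur_upto (Obs : finType) (M : model Obs) (pi : nat -> st M) n r :
  ocur (upto pi n) r = last (o_init M) (ol M r n).
Proof. by rewrite /ocur /upto size_mkseq. Qed.

Lemma ol_stop (Obs : finType) (M : model Obs) r n :
  stops_at r n -> ol M r n.+1 = [:: last (o_init M) (ol M r n)].
Proof. by move=> H /=; rewrite H. Qed.

Lemma ocur_step (Obs : finType) (M : model Obs) (pi : nat -> st M) n r :
  stops_at r n -> ocur (upto pi n.+1) r = ocur (upto pi n) r.
Proof. by move=> H; rewrite !ocur_upto ol_stop. Qed.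

Lemma stops_le (Obs : finType) (r : record Obs) n m :
  stops_at r n -> n <= m -> stops_at r m.
Proof. move=> H Hnm k Hk; apply: H; exact: leq_ltn_trans Hnm Hk. Qed.

Lemma IS_step (Obs : finType) (M : model Obs) (pi : nat -> st M) n r :
  stops_at r n ->
  IS (upto pi n.+1) r = UT (IS (upto pi n) r) (pi n.+1) (ocur (upto pi n) r).
Proof.
move=> Hst; apply: predext => x.
rewrite IS_path /upto ?size_mkseq //= -/(upto pi n.+1).
have Hol : forall o', o' \in ol M r n.+1 -> o' = ocur (upto pi n) r.
  by move=> o'; rewrite ol_stop // inE ocur_upto => /eqP.
split.
- case=> p [Hp [Hsim Hx]]; split.
  + exists (p n); split; last by rewrite -Hx; exact: Hp.
    rewrite IS_path ?size_mkseq //=; exists p; split=> //; split=> // i.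
    move=> Hi o Ho; have := Hsim i (ltnW Hi) o Ho.
    by rewrite /upto !nth_mkseq // ltnW.
  + rewrite -Hx sim_sym; have := Hsim n.+1 (leqnn _) (ocur (upto pi n) r).
    rewrite nth_mkseq //; apply; rewrite ol_stop // inE ocur_upto.
    exact: eqxx.
- case=> [[s [HI Ht]] Ho]; move: HI; rewrite IS_path ?size_mkseq //=.
  case=> p [Hp [Hsim Hs]].
  exists (glue p n (spath x)); split.
    by apply: glue_path => //; [exact: spath_path | rewrite Hs].
  split; last by rewrite /glue ltnn subnn.
  move=> i Hi o Ho'; rewrite nth_mkseq // /glue.
  case: (leqP i n) => Hin.
  + by have := Hsim i Hin o Ho'; rewrite nth_mkseq.
  + have Hi' : i = n.+1 by apply/eqP; rewrite eqn_leq Hin andbT -ltnS.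
    subst i; rewrite subnn /= sim_sym.
    by move: Ho'; move/Hol => ->.
Qed.

Lemma IS_steps (Obs : finType) (M : model Obs) (pi : nat -> st M) n r j :
  stops_at r n ->
  IS (upto pi (n + j)) r = UTn j (IS (upto pi n) r) (from pi n) (ocur (upto pi n) r) /\
  ocur (upto pi (n + j)) r = ocur (upto pi n) r.
Proof.
move=> Hst; elim: j => [|j [IH1 IH2]]; first by rewrite addn0.
have Hst' : stops_at r (n + j) by apply: stops_le Hst (leq_addr _ _).
rewrite addnS IS_step // ocur_step // IH1 IH2; split=> //.
by rewrite /= /from addnS.
Qed.

Scheme hform_ind2 := Induction for hform Sort Prop
  with pform_ind2 := Induction for pform Sort Prop.
Combined Scheme hp_ind from hform_ind2, pform_ind2.

Lemma from_from (Obs : finType) (M : model Obs) (pi : nat -> st M) n j : from (from pi n) j = from pi (n + j).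
Proof. apply: functional_extensionality => i; by rewrite /from addnA. Qed.

Lemma upto_history (Obs : finType) (M : model Obs) (pi : nat -> st M) n :
  is_path pi -> is_history (upto pi n).
Proof.
move=> Hp; split; first by rewrite size_mkseq.
by exists pi; split=> //; rewrite /prefix_of /upto size_mkseq.
Qed.

Theorem mainTheorem3 (Obs : finType) (M : model Obs) :
  (forall (phi : hform Obs) (h : seq (st M)) (r : record Obs),
      is_history h -> stops_at_hist r h ->
      (hsat phi h r <-> isat phi (hlast h) (IS h r) (ocur h r))) /\
  (forall (psi : pform Obs) (pi : nat -> st M) (n : nat) (r : record Obs),
      is_path pi -> stops_at r n ->
      (psat psi pi n r <->
       ipsat psi (from pi n) (IS (upto pi n) r) (ocur (upto pi n) r))).
Proof.
apply: hp_ind.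
- by move=> p h r _ _.
- move=> f IH h r Hh Hs /=; by rewrite IH.
- move=> f1 IH1 f2 IH2 h r Hh Hs /=; by rewrite IH1 // IH2.
-
  move=> g IH h r Hh Hs /=.
  have Hh0 := Hh; case: Hh0 => Hsz [p0 [Hp0 Hpre0]].
  have Hsz' : size h = (size h).-1.+1 by rewrite prednK.
  set n := (size h).-1 in Hsz' *.
  have Hup : forall pi, prefix_of h pi -> h = upto pi n.
    by move=> pi; rewrite /prefix_of /upto -Hsz'.
  split.
  + move=> H pi' Hpi' H0.
    have Hn0 : p0 n = hlast h by rewrite /hlast Hpre0 Hsz' last_mkseq.
    pose pi := glue p0 n (from pi' 1).
    have Hpi : is_path pi.
      apply: glue_path => //; first by move=> i; exact: Hpi'.
      rewrite Hn0 -H0; exact: Hpi'.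
    have Hpre : prefix_of h pi.
      rewrite /prefix_of {1}Hpre0; apply/eq_in_map => i.
      rewrite mem_iota add0n Hsz' ltnS => /andP [_ Hi].
      by rewrite /pi /glue Hi.
    have Hf : from pi n = pi'.
      apply: functional_extensionality => i; rewrite /from /pi /glue.
      case: i => [|i]; first by rewrite addn0 leqnn Hn0.
      by rewrite leqNgt addnS ltnS leq_addr /= subSS addKn.
    have := H pi Hpi Hpre; rewrite IH // -(Hup pi Hpre) Hf; exact.
  + move=> H pi Hpi Hpre; rewrite IH //; rewrite -Hup //.
    apply: H.
    * by move=> i; rewrite /from addnS; exact: Hpi.
    * by rewrite /from addn0 /hlast Hpre Hsz' last_mkseq.
-
  move=> f IH h r Hh Hs /=; split.
  + move=> H s' [h' [Hh' [He Hl]]].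
    have Hs' : stops_at_hist r h' by rewrite /stops_at_hist (proj1 He).
    have := H h' Hh' He; rewrite IH // (IS_hequiv He) Hl /ocur (proj1 He); exact.
  + move=> H h' Hh' He.
    have Hs' : stops_at_hist r h' by rewrite /stops_at_hist (proj1 He).
    rewrite IH // (IS_hequiv He) /ocur (proj1 He); apply: H.
    by exists h'.
-
  move=> o f IH h r Hh Hs /=.
  rewrite IH //.
  + by rewrite IS_delta ?ocur_delta //; case: Hh.
  + move=> m Hm; rewrite /rec_at filter_rcons /= eq_sym (gtn_eqF Hm) /=; exact: Hs.
-
  move=> f IH pi n r Hp Hs /=.
  rewrite IH; last by rewrite /stops_at_hist size_mkseq.
  + by rewrite /from addn0 /hlast /upto last_mkseq.
  + exact: upto_history.
- move=> g IH pi n r Hp Hs /=; by rewrite IH.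
- move=> g1 IH1 g2 IH2 pi n r Hp Hs /=; by rewrite IH1 // IH2.
-
  move=> g IH pi n r Hp Hs /=.
  have Hs1 : stops_at r n.+1 by apply: stops_le Hs _.
  rewrite IH //.
  rewrite IS_step // ocur_step // from_from addn1 /from addn1; exact: iff_refl.
-
  move=> g1 IH1 g2 IH2 pi n r Hp Hs /=.
  have Key : forall g : pform Obs, (forall (pi : nat -> st M) n r, is_path pi -> stops_at r n ->
      (psat g pi n r <-> ipsat g (from pi n) (IS (upto pi n) r) (ocur (upto pi n) r))) ->
      forall j, psat g pi (n + j) r <->
        ipsat g (from (from pi n) j) (UTn j (IS (upto pi n) r) (from pi n) (ocur (upto pi n) r))
          (ocur (upto pi n) r).
    move=> g IH j; rewrite IH //; last by apply: stops_le Hs (leq_addr _ _).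
    by case: (IS_steps pi j Hs) => -> ->; rewrite from_from.
  split.
  + case=> m [Hnm [H2 H1]]; exists (m - n).
    rewrite -Key // subnKC //; split=> // k Hk.
    rewrite -Key //; apply: H1; first exact: leq_addr.
    by rewrite -ltn_subRL.
  + case=> j [H2 H1]; exists (n + j); split; first exact: leq_addr.
    rewrite Key //; split=> // k Hnk Hk.
    rewrite -(subnKC Hnk) Key //; apply: H1.
    by rewrite ltn_subLR.
Qed.
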